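(* For $I=(z_1^3-z_3z_2,\,z_2^2)\subset\mathcal{O}_3$ one has $\mathbf{T}_2(I)=3$ and $D_2(I)\geq 4$. More precisely, let $V=\{z_1^3-z_3z_2=0\}\subset\mathbb{C}^3$; for every plane $S_{a,b}=\{z_3+az_1+bz_2=0\}$ with $a\neq0$, $b\neq0$, the germ $V\cap S_{a,b}$ at $0$ has an irreducible 1-dimensional component with minimal parametrization $\gamma_{a,b}$ such that $\frac{v(g\circ\gamma_{a,b})}{v(\gamma_{a,b})}\geq 4$ for all $g\in I$.
   Context: $\mathcal{O}_n$ denotes the local ring of germs at $0\in\mathbb{C}^n$ of holomorphic functions. $\Gamma$ denotes the set of non-constant germs of holomorphic maps $z\colon(\mathbb{C},0)\to(\mathbb{C}^n,0)$; $v(z)$ is the order of vanishing of $z$ at $0$ and $v(g\circ z)$ the order of vanishing of $g\circ z$ ($v(0)=\infty$). For an ideal $I\subset\mathcal{O}_n$, $\mathbf{T}_1(I)=\sup_{z\in\Gamma}\inf_{g\in I}\frac{v(g\circ z)}{v(z)}$, and $\mathbf{T}_q(I)=\inf_{\{w_1,\dots,w_{q-1}\}}\mathbf{T}_1(I,w_1,\dots,w_{q-1})$ over all linear functions $w_j$. Catlin $q$-type: let $G^{n-q+1}$ be the Grassmannian of $(n-q+1)$-dimensional linear subspaces of $\mathbb{C}^n$. For a germ $(V^q,0)$ of a $q$-dimensional complex analytic variety, for $S$ in a non-empty Zariski open subset of $G^{n-q+1}$ the germ $V^q\cap S$ at $0$ consists of finitely many irreducible 1-dimensional components with minimal parametrizations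 $\gamma_S^k$, $k=1,\dots,P$; for each $g\in\mathcal{O}_n$ the quantity $\max_{k}\frac{v(g\circ\gamma_S^k)}{v(\gamma_S^k)}$ takes one common value (its generic value) for all $S$ in a non-empty Zariski open subset of $G^{n-q+1}$. Then $D_q(I)=\sup_{V^q}\inf_{g\in I}\big(\text{generic value over }S\text{ of }\max_{k}\frac{v(g\circ\gamma_S^k)}{v(\gamma_S^k)}\big)$. *)

(* Defs.v *)
From Stdlib Require Import Reals List Arith.
Import ListNotations.
Open Scope R_scope.

Record Cx := mkC { re : R ; im : R }.
Definition C0 : Cx := mkC 0 0.
Definition C1 : Cx := mkC 1 0.
Definition Cadd (x y : Cx) : Cx := mkC (re x + re y) (im x + im y).
Definition Copp (x : Cx) : Cx := mkC (- re x) (- im x).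
Definition Cmul (x y : Cx) : Cx :=
  mkC (re x * re y - im x * im y) (re x * im y + im x * re y).
Definition Cmod (x : Cx) : R := sqrt (re x ^ 2 + im x ^ 2).
Definition Csum (l : list Cx) : Cx := fold_right Cadd C0 l.

(** * Power series in n variables (germs at 0 of C^n)
    A multi-index is a list of naturals of length n; a series is its
    coefficient function (only multi-indices of length n are meaningful). *)
Definition series := list nat -> Cx.

Definition msize (a : list nat) : nat := fold_right Nat.add 0%nat a.

(** convergent power series = germs of holomorphic functions, O_n *)
Definition convergent (n : nat) (f : series) : Prop :=
  exists M r : R, 0 < r /\
    forall a, length a = n -> Cmod (f a) <= M * r ^ (msize a).

Definition series_eq (n : nat) (f g : series) : Prop :=
  forall a, length a = n -> f a = g a.

Definition sadd (f g : series) : series := fun a => Cadd (f a) (g a).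
Definition szero : series := fun _ => C0.

Fixpoint splits (a : list nat) : list (list nat * list nat) :=
  match a with
  | [] => [([], [])]
  | x :: a' =>
      flat_map (fun i => map (fun bc => (i :: fst bc, (x - i)%nat :: snd bc))
                             (splits a'))
               (seq 0 (S x))
  end.

Definition smul (f g : series) : series :=
  fun a => Csum (map (fun bc => Cmul (f (fst bc)) (g (snd bc))) (splits a)).

Definition monomial (b : list nat) (c : Cx) : series :=
  fun a => if list_eq_dec Nat.eq_dec a b then c else C0.

(** i-th unit multi-index in n variables (coordinates numbered from 0) *)
Definition unit_idx (n i : nat) : list nat :=
  map (fun j => if Nat.eqb j i then 1%nat else 0%nat) (seq 0 n).

Definition linear_form (n : nat) (c : nat -> Cx) : series :=
  fold_right sadd szero (map (fun i => monomial (unit_idx n i) (c i)) (seq 0 n)).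

Fixpoint lin_comb (hs gs : list series) : series :=
  match hs, gs with
  | h :: hs', g :: gs' => sadd (smul h g) (lin_comb hs' gs')
  | _, _ => szero
  end.

Definition in_ideal (n : nat) (gens : list series) (g : series) : Prop :=
  exists hs : list series, length hs = length gens /\
    Forall (convergent n) hs /\ series_eq n g (lin_comb hs gens).

Definition series1 := nat -> Cx.

Definition one1 : series1 := fun k => if Nat.eqb k 0 then C1 else C0.
Definition mul1 (s t : series1) : series1 :=
  fun k => Csum (map (fun j => Cmul (s j) (t (k - j)%nat)) (seq 0 (S k))).
Fixpoint pow1 (s : series1) (m : nat) : series1 :=
  match m with O => one1 | S m' => mul1 s (pow1 s m') end.

Definition convergent1 (s : series1) : Prop :=
  exists M r : R, 0 < r /\ forall k, Cmod (s k) <= M * r ^ k.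

(** order of vanishing of a one-variable series; None = infinity *)
Definition ord1 (s : series1) (o : option nat) : Prop :=
  match o with
  | Some k => s k <> C0 /\ forall j, (j < k)%nat -> s j = C0
  | None => forall j, s j = C0
  end.

(** composition of one-variable series, for phi with phi 0 = 0 *)
Definition comp1 (s phi : series1) : series1 :=
  fun k => Csum (map (fun m => Cmul (s m) (pow1 phi m k)) (seq 0 (S k))).

(** a curve germ (C,0) -> (C^n,0): coordinate i (i < n) has coefficients z i *)
Definition curve := nat -> series1.

Definition in_Gamma (n : nat) (z : curve) : Prop :=
  (forall i, (i < n)%nat -> convergent1 (z i) /\ z i 0%nat = C0) /\
  exists i k, (i < n)%nat /\ z i k <> C0.

Definition curve_ord (n : nat) (z : curve) (m : nat) : Prop :=
  (exists i, (i < n)%nat /\ z i m <> C0) /\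
  forall i j, (i < n)%nat -> (j < m)%nat -> z i j = C0.

Fixpoint mono_from (z : curve) (i : nat) (a : list nat) : series1 :=
  match a with
  | [] => one1
  | x :: a' => mul1 (pow1 (z i) x) (mono_from z (S i) a')
  end.

Fixpoint bounded_idx (n k : nat) : list (list nat) :=
  match n with
  | O => [[]]
  | S n' => flat_map (fun x => map (cons x) (bounded_idx n' (k - x)))
                     (seq 0 (S k))
  end.

(** g ∘ z for a curve with z(0) = 0 (coefficient k only involves |a| <= k) *)
Definition gcomp (n : nat) (g : series) (z : curve) : series1 :=
  fun k => Csum (map (fun a => Cmul (g a) (mono_from z 0 a k)) (bounded_idx n k)).

Inductive ER := Fin (r : R) | PInf.
Definition ER_le (x y : ER) : Prop :=
  match x, y with
  | _, PInf => True
  | PInf, Fin _ => False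
  | Fin a, Fin b => a <= b
  end.

Definition IsSup (P : ER -> Prop) (s : ER) : Prop :=
  (forall x, P x -> ER_le x s) /\ (forall u, (forall x, P x -> ER_le x u) -> ER_le s u).
Definition IsInf (P : ER -> Prop) (s : ER) : Prop :=
  (forall x, P x -> ER_le s x) /\ (forall u, (forall x, P x -> ER_le u x) -> ER_le u s).

Definition ratio (n : nat) (g : series) (z : curve) (r : ER) : Prop :=
  exists m, curve_ord n z m /\
   ((exists k, ord1 (gcomp n g z) (Some k) /\ r = Fin (INR k / INR m)) \/
    (ord1 (gcomp n g z) None /\ r = PInf)).

Definition T1_is (n : nat) (J : series -> Prop) (t : ER) : Prop :=
  IsSup (fun s => exists z, in_Gamma n z /\
                   IsInf (fun r => exists g, J g /\ ratio n g z r) s) t.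

Definition Tq_is (n q : nat) (gens : list series) (t : ER) : Prop :=
  IsInf (fun s => exists ws : list (nat -> Cx), length ws = (q - 1)%nat /\
            T1_is n (in_ideal n (gens ++ map (linear_form n) ws)) s) t.

Definition minimal_param (n : nat) (z : curve) : Prop :=
  ~ exists (delta : curve) (phi : series1),
      (forall i, (i < n)%nat -> convergent1 (delta i) /\ delta i 0%nat = C0) /\
      convergent1 phi /\ phi 0%nat = C0 /\ phi 1%nat = C0 /\
      forall i, (i < n)%nat -> forall k, z i k = comp1 (delta i) phi k.

(** * The data of the theorem (n = 3, z1,z2,z3 are coordinates 0,1,2) *)
Definition f1 : series :=
  sadd (monomial [3;0;0]%nat C1) (monomial [0;1;1]%nat (Copp C1)).
Definition f2 : series := monomial [0;2;0]%nat C1.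
Definition I_gens : list series := [f1; f2].

Definition plane_form (a b : Cx) : series :=
  linear_form 3 (fun i => match i with 0%nat => a | 1%nat => b | _ => C1 end).

(* Main.v *)
Require Import Defs.
From Stdlib Require Import Reals List Arith Lia Lra Classical.
Import ListNotations.
Open Scope R_scope.

Lemma Cx_ext x y : re x = re y -> im x = im y -> x = y.
Proof. destruct x, y; simpl; intros; subst; reflexivity. Qed.
Definition Csub x y := Cadd x (Copp y).
Lemma Cring : ring_theory C0 Defs.C1 Cadd Cmul Csub Copp (@eq Cx).
Proof. constructor; intros; unfold Csub; apply Cx_ext; simpl; ring. Qed.
Add Ring CxRing : Cring.
Lemma Cmul_0_l x : Cmul C0 x = C0. Proof. apply Cx_ext; simpl; ring. Qed.
Lemma Cmul_0_r x : Cmul x C0 = C0. Proof. apply Cx_ext; simpl; ring. Qed.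
Lemma Cadd_0_l x : Cadd C0 x = x. Proof. apply Cx_ext; simpl; ring. Qed.
Lemma Cadd_0_r x : Cadd x C0 = x. Proof. apply Cx_ext; simpl; ring. Qed.
Lemma Cmul_1_l x : Cmul Defs.C1 x = x. Proof. apply Cx_ext; simpl; ring. Qed.
Lemma Cmul_1_r x : Cmul x Defs.C1 = x. Proof. apply Cx_ext; simpl; ring. Qed.
Global Hint Rewrite Cmul_0_l Cmul_0_r Cadd_0_l Cadd_0_r Cmul_1_l Cmul_1_r : czero.

Lemma Cmul_neq0 x y : x <> C0 -> y <> C0 -> Cmul x y <> C0.
Proof.
  intros Hx Hy H. destruct x as [a b], y as [c d]. unfold Cmul in H; simpl in H.
  injection H as H1 H2.
  assert (E : (a*a+b*b)*(c*c+d*d) = 0) by nra.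
  apply Rmult_integral in E. destruct E as [E|E].
  - apply Hx. assert (a = 0) by nra. assert (b = 0) by nra. subst; reflexivity.
  - apply Hy. assert (c = 0) by nra. assert (d = 0) by nra. subst; reflexivity.
Qed.
Lemma Copp_neq0 x : x <> C0 -> Copp x <> C0.
Proof. intros Hx H. apply Hx. destruct x as [a b]; unfold Copp in H; injection H as H1 H2.
  apply Cx_ext; simpl; lra. Qed.
Lemma C1_neq0 : Defs.C1 <> C0.
Proof. intro H; injection H; lra. Qed.

Arguments Cmul : simpl never.
Arguments Cadd : simpl never.
Arguments Copp : simpl never.

Lemma Csum_cons x l : Csum (x :: l) = Cadd x (Csum l). Proof. reflexivity. Qed.
Lemma Csum_app l1 l2 : Csum (l1 ++ l2) = Cadd (Csum l1) (Csum l2).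
Proof. induction l1; simpl. - autorewrite with czero; auto. - rewrite IHl1. ring. Qed.
Lemma Csum_map_zero {A} (F : A -> Cx) l : (forall x, In x l -> F x = C0) -> Csum (map F l) = C0.
Proof. induction l; simpl; intros H; auto. rewrite H by auto. rewrite IHl by auto. ring. Qed.
Lemma Csum_map_add {A} (F G : A -> Cx) l :
  Csum (map (fun x => Cadd (F x) (G x)) l) = Cadd (Csum (map F l)) (Csum (map G l)).
Proof. induction l; simpl. - autorewrite with czero; auto. - rewrite IHl; ring. Qed.
Lemma Csum_map_ext {A} (F G : A -> Cx) l : (forall x, In x l -> F x = G x) -> Csum (map F l) = Csum (map G l).
Proof. intros H; rewrite (map_ext_in F G l H); auto. Qed.
Lemma Csum_flat_map {A B} (F : B -> Cx) (g : A -> list B) l :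
  Csum (map F (flat_map g l)) = Csum (map (fun x => Csum (map F (g x))) l).
Proof. induction l; simpl; auto. rewrite map_app, Csum_app, IHl; auto. Qed.
Lemma Csum_seq_single (G : nat -> Cx) x0 s len :
  (forall x, (s <= x < s + len)%nat -> x <> x0 -> G x = C0) ->
  Csum (map G (seq s len)) = if andb (s <=? x0)%nat (x0 <? s + len)%nat then G x0 else C0.
Proof.
  revert s. induction len; intros s H; simpl.
  - destruct (Nat.leb_spec s x0), (Nat.ltb_spec x0 (s + 0)); simpl; auto; lia.
  - rewrite IHlen by (intros; apply H; lia). destruct (Nat.eq_dec s x0).
    + subst. rewrite Nat.leb_refl. replace (S x0 <=? x0)%nat with false by (symmetry; apply Nat.leb_gt; lia).
      replace (x0 <? x0 + S len)%nat with true by (symmetry; apply Nat.ltb_lt; lia). simpl. autorewrite with czero; auto.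
    + rewrite H by (auto; lia). autorewrite with czero.
      destruct (Nat.leb_spec s x0), (Nat.leb_spec (S s) x0), (Nat.ltb_spec x0 (S s + len)), (Nat.ltb_spec x0 (s + S len)); simpl; auto; lia.
Qed.
Lemma seq_single0 (G : nat -> Cx) x0 n :
  (forall x, (x <= n)%nat -> x <> x0 -> G x = C0) -> (x0 <= n)%nat -> Csum (map G (seq 0 (S n))) = G x0.
Proof. intros H Hx. rewrite (Csum_seq_single G x0) by (intros; apply H; lia).
  destruct (Nat.leb_spec 0 x0), (Nat.ltb_spec x0 (0 + S n)); simpl; auto; lia. Qed.

Lemma bi_length n k a : In a (bounded_idx n k) -> length a = n.
Proof.
  revert k a; induction n; intros k a H; cbn [bounded_idx] in H.
  - destruct H as [H|[]]; subst; auto.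
  - apply in_flat_map in H. destruct H as [x [_ H]]. apply in_map_iff in H.
    destruct H as [b [<- Hb]]. simpl. f_equal. eapply IHn; eauto.
Qed.

Lemma msize_cons x a : msize (x :: a) = (x + msize a)%nat.
Proof. reflexivity. Qed.

Lemma bi_single n k a0 (F : list nat -> Cx) :
  length a0 = n -> (forall a, a <> a0 -> F a = C0) ->
  Csum (map F (bounded_idx n k)) = if (msize a0 <=? k)%nat then F a0 else C0.
Proof.
  revert k a0 F; induction n; intros k a0 F Hl HF.
  - destruct a0; [|discriminate]. simpl. autorewrite with czero. reflexivity.
  - destruct a0 as [|x0 a0']; [discriminate|]. simpl in Hl. injection Hl as Hl.
    cbn [bounded_idx]. rewrite Csum_flat_map.
    rewrite (Csum_seq_single _ x0).
    + rewrite map_map. rewrite (IHn (k - x0)%nat a0' (fun a => F (x0 :: a))); auto.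
      * rewrite msize_cons.
        destruct (Nat.leb_spec 0 x0), (Nat.ltb_spec x0 (0 + S k)), (Nat.leb_spec (msize a0') (k - x0)),
          (Nat.leb_spec (x0 + msize a0') k); simpl; auto; lia.
      * intros a Ha. apply HF. intro E; injection E; auto.
    + intros x _ Hx. rewrite map_map. apply Csum_map_zero. intros a _. apply HF.
      intro E; injection E; auto.
Qed.

Lemma gcomp_ext n g g' z k : (forall a, length a = n -> g a = g' a) -> gcomp n g z k = gcomp n g' z k.
Proof. intros H. unfold gcomp. apply Csum_map_ext. intros a Ha. rewrite H; auto. eapply bi_length; eauto. Qed.
Lemma gcomp_sadd n f g z k : gcomp n (sadd f g) z k = Cadd (gcomp n f z k) (gcomp n g z k).
Proof. unfold gcomp, sadd. rewrite <- Csum_map_add. apply Csum_map_ext. intros; ring. Qed.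
Lemma gcomp_zero n g z k : (forall a, g a = C0) -> gcomp n g z k = C0.
Proof. intros H. unfold gcomp. apply Csum_map_zero. intros a _. rewrite H; ring. Qed.
Lemma gcomp_monomial n b c z k : length b = n ->
  gcomp n (monomial b c) z k = if (msize b <=? k)%nat then Cmul c (mono_from z 0 b k) else C0.
Proof.
  intros Hl. unfold gcomp. rewrite (bi_single n k b); auto.
  - unfold monomial. destruct (list_eq_dec Nat.eq_dec b b); [|congruence]. reflexivity.
  - intros a Ha. unfold monomial. destruct (list_eq_dec Nat.eq_dec a b); [congruence|]. ring.
Qed.

Lemma monomial_cons x r c y b :
  monomial (x :: r) c (y :: b) = if Nat.eqb y x then monomial r c b else C0.
Proof.
  unfold monomial. destruct (Nat.eqb_spec y x).
  - subst. destruct (list_eq_dec Nat.eq_dec (x :: b) (x :: r)), (list_eq_dec Nat.eq_dec b r); congruence.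
  - destruct (list_eq_dec Nat.eq_dec (y :: b) (x :: r)); congruence.
Qed.

Lemma smul_one_aux a (f : list nat -> Cx) :
  Csum (map (fun bc => Cmul (monomial (repeat 0%nat (length a)) Defs.C1 (fst bc)) (f (snd bc))) (splits a)) = f a.
Proof.
  revert f; induction a as [|x a IH]; intros f.
  - simpl. unfold monomial. simpl. autorewrite with czero. reflexivity.
  - cbn [splits]. rewrite Csum_flat_map. rewrite (seq_single0 _ 0%nat); [| |lia].
    + rewrite map_map. simpl. rewrite <- (IH (fun c => f (x :: c))).
      apply Csum_map_ext. intros bc _. rewrite monomial_cons. simpl. rewrite Nat.sub_0_r. reflexivity.
    + intros i _ Hi. rewrite map_map. apply Csum_map_zero. intros bc _. simpl length.
      cbn [repeat fst]. rewrite monomial_cons. destruct (Nat.eqb_spec i 0); [congruence|]. ring.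
Qed.

Definition one3 : series := monomial [0;0;0]%nat Defs.C1.
Lemma smul_one3 f a : length a = 3%nat -> smul one3 f a = f a.
Proof. intros H. unfold smul, one3. rewrite <- (smul_one_aux a f). rewrite H. reflexivity. Qed.
Lemma smul_szero f a : smul szero f a = C0.
Proof. unfold smul. apply Csum_map_zero. intros; unfold szero; ring. Qed.

Lemma mul1_ext s s' t t' k : (forall j, s j = s' j) -> (forall j, t j = t' j) -> mul1 s t k = mul1 s' t' k.
Proof. intros H1 H2. unfold mul1. apply Csum_map_ext. intros; rewrite H1, H2; auto. Qed.

Lemma mul1_low s t p q k : (forall j, (j < p)%nat -> s j = C0) -> (forall j, (j < q)%nat -> t j = C0) ->
  (k < p + q)%nat -> mul1 s t k = C0.
Proof.
  intros Hs Ht Hk. unfold mul1. apply Csum_map_zero. intros j Hj. apply in_seq in Hj.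
  destruct (Nat.ltb_spec j p). - rewrite Hs by auto; ring. - rewrite Ht by lia; ring.
Qed.

Lemma mul1_lead s t p q : (forall j, (j < p)%nat -> s j = C0) -> (forall j, (j < q)%nat -> t j = C0) ->
  mul1 s t (p + q)%nat = Cmul (s p) (t q).
Proof.
  intros Hs Ht. unfold mul1. rewrite (seq_single0 _ p); [| |lia].
  - f_equal. f_equal. lia.
  - intros j Hj1 Hj. destruct (Nat.ltb_spec j p). + rewrite Hs by auto; ring. + rewrite Ht by lia; ring.
Qed.

Lemma mul1_high s t p q k : (forall j, (p < j)%nat -> s j = C0) -> (forall j, (q < j)%nat -> t j = C0) ->
  (p + q < k)%nat -> mul1 s t k = C0.
Proof.
  intros Hs Ht Hk. unfold mul1. apply Csum_map_zero. intros j Hj. apply in_seq in Hj.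
  destruct (Nat.ltb_spec p j). - rewrite Hs by auto; ring. - rewrite Ht by lia; ring.
Qed.

Lemma one1_0 : one1 0%nat = Defs.C1. Proof. reflexivity. Qed.
Lemma one1_S j : (0 < j)%nat -> one1 j = C0.
Proof. intros H. unfold one1. destruct j; [lia|reflexivity]. Qed.

Lemma mul1_one_r s k : mul1 s one1 k = s k.
Proof.
  unfold mul1. rewrite (seq_single0 _ k); [| |lia].
  - rewrite Nat.sub_diag, one1_0. ring.
  - intros j Hj1 Hj. rewrite one1_S by lia; ring.
Qed.
Lemma mul1_one_l s k : mul1 one1 s k = s k.
Proof.
  unfold mul1. rewrite (seq_single0 _ 0%nat); [| |lia].
  - rewrite Nat.sub_0_r, one1_0. ring.
  - intros j Hj1 Hj. rewrite one1_S by lia; ring.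
Qed.

Fixpoint Cpow (x : Cx) (m : nat) : Cx := match m with O => Defs.C1 | S m' => Cmul x (Cpow x m') end.
Lemma Cpow_neq0 x m : x <> C0 -> Cpow x m <> C0.
Proof. intros H; induction m; simpl. apply C1_neq0. apply Cmul_neq0; auto. Qed.

Lemma pow1_low s p m : (forall j, (j < p)%nat -> s j = C0) -> forall k, (k < m * p)%nat -> Defs.pow1 s m k = C0.
Proof.
  intros Hs. induction m; intros k Hk; simpl in *. lia.
  apply (mul1_low s (Defs.pow1 s m) p (m * p)); auto.
Qed.
Lemma pow1_lead s p m : (forall j, (j < p)%nat -> s j = C0) -> Defs.pow1 s m (m * p)%nat = Cpow (s p) m.
Proof.
  intros Hs. induction m; simpl. reflexivity.
  rewrite (mul1_lead s (Defs.pow1 s m) p (m * p)); auto. rewrite IHm; auto.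
  intros; apply (pow1_low s p); auto.
Qed.
Lemma pow1_high s p m : (forall j, (p < j)%nat -> s j = C0) -> forall k, (m * p < k)%nat -> Defs.pow1 s m k = C0.
Proof.
  intros Hs. induction m; intros k Hk; simpl in *. apply one1_S; lia.
  apply (mul1_high s (Defs.pow1 s m) p (m * p)); auto.
Qed.

Lemma ER_le_trans x y z : ER_le x y -> ER_le y z -> ER_le x z.
Proof. destruct x, y, z; simpl; auto; try lra; tauto. Qed.

Lemma inf_exists (P : ER -> Prop) : (forall r, P (Fin r) -> 0 <= r) -> exists s, IsInf P s.
Proof.
  intros Hnn. destruct (classic (exists r, P (Fin r))) as [[r0 Hr0]|Hno].
  - set (E := fun y => P (Fin (- y))).
    assert (Hb : bound E). { exists 0. intros y Hy. apply Hnn in Hy. lra. }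
    assert (He : exists y, E y). { exists (- r0). unfold E. rewrite Ropp_involutive. auto. }
    destruct (completeness E Hb He) as [m [Hm1 Hm2]].
    exists (Fin (- m)). split.
    + intros [r|] Hx; simpl; auto.
      assert (E (- r)) by (unfold E; rewrite Ropp_involutive; auto).
      apply Hm1 in H. lra.
    + intros [v|] Hu; simpl.
      * assert (is_upper_bound E (- v)). { intros y Hy. apply Hu in Hy. simpl in Hy. lra. }
        apply Hm2 in H. lra.
      * apply (Hu _ Hr0).
  - exists PInf. split.
    + intros [r|] Hx; simpl; auto. apply Hno; eauto.
    + intros [v|] _; simpl; auto.
Qed.

Lemma sup_exists (P : ER -> Prop) : (exists x, P x) -> exists s, IsSup P s.
Proof.
  intros [x0 Hx0]. destruct (classic (P PInf)) as [HP|HP].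
  - exists PInf. split. + intros [r|] _; simpl; auto. + intros u Hu. apply Hu; auto.
  - set (E := fun r => P (Fin r)).
    assert (He : exists r, E r). { destruct x0 as [r|]; [exists r; auto|contradiction]. }
    destruct (classic (bound E)) as [Hb|Hb].
    + destruct (completeness E Hb He) as [m [Hm1 Hm2]].
      exists (Fin m). split.
      * intros [r|] Hx; simpl; [apply Hm1; auto | contradiction].
      * intros [v|] Hu; simpl; auto. apply Hm2. intros y Hy. apply Hu in Hy. simpl in Hy. auto.
    + exists PInf. split.
      * intros [r|] _; simpl; auto.
      * intros [v|] Hu; simpl; auto. apply Hb. exists v. intros y Hy. apply Hu in Hy. auto.
Qed.

Lemma ratio_nonneg n g z r : ratio n g z (Fin r) -> 0 <= r.
Proof.
  intros [m [_ [[k [_ E]]|[_ E]]]]; [|discriminate]. injection E as ->.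
  destruct m. - simpl. unfold Rdiv. rewrite Rinv_0. lra.
  - unfold Rdiv; apply Rmult_le_pos; [apply pos_INR|]. apply Rlt_le, Rinv_0_lt_compat, lt_0_INR; lia.
Qed.

Lemma least_exists (P : nat -> Prop) : (exists n, P n) -> exists n, P n /\ forall j, (j < n)%nat -> ~ P j.
Proof.
  intros [n Hn]. apply NNPP. intro Hno.
  assert (forall m j, (j <= m)%nat -> ~ P j).
  { induction m; intros j Hj HP.
    - apply Hno. exists j. split; auto. intros; lia.
    - destruct (Nat.eq_dec j (S m)).
      + subst. apply Hno. exists (S m). split; auto. intros j Hj' HPj. apply (IHm j); auto; lia.
      + apply (IHm j); auto; lia. }
  apply (H n n); auto.
Qed.

Lemma Cmod_nonneg x : 0 <= Cmod x. Proof. apply sqrt_pos. Qed.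
Lemma Cmod_C0 : Cmod C0 = 0.
Proof. unfold Cmod; simpl. replace (0*(0*1)+0*(0*1)) with 0 by ring. apply sqrt_0. Qed.

Lemma poly_conv (s : series1) : (forall k, (3 < k)%nat -> s k = C0) -> convergent1 s.
Proof.
  intros H. exists (Cmod (s 0%nat) + Cmod (s 1%nat) + Cmod (s 2%nat) + Cmod (s 3%nat)), 1. split; [lra|].
  intros k. rewrite pow1, Rmult_1_r.
  pose proof (Cmod_nonneg (s 0%nat)). pose proof (Cmod_nonneg (s 1%nat)).
  pose proof (Cmod_nonneg (s 2%nat)). pose proof (Cmod_nonneg (s 3%nat)).
  destruct k as [|[|[|[|k]]]]; try lra. rewrite H by lia. rewrite Cmod_C0. lra.
Qed.

Lemma mono_high (z : curve) a : forall i, (forall i' j, (3 < j)%nat -> z i' j = C0) ->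
  forall k, (3 * msize a < k)%nat -> mono_from z i a k = C0.
Proof.
  induction a as [|x a IH]; intros i Hz k Hk; cbn [mono_from].
  - apply one1_S. lia.
  - rewrite msize_cons in Hk. apply (mul1_high _ _ (x * 3) (3 * msize a)); [| |lia].
    + apply pow1_high with (p := 3%nat). intros; apply Hz; auto.
    + intros j Hj; apply IH; auto.
Qed.

Definition gam (a b : Cx) : curve := fun i k =>
  match i, k with
  | 0%nat, 1%nat => Copp a | 0%nat, 2%nat => Copp b
  | 1%nat, 2%nat => Copp a | 1%nat, 3%nat => Copp b
  | 2%nat, 1%nat => Cmul a a | 2%nat, 2%nat => Cadd (Cmul a b) (Cmul a b)
  | 2%nat, 3%nat => Cmul b b
  | _, _ => C0 end.

Lemma gam_high a b i j : (3 < j)%nat -> gam a b i j = C0.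
Proof. intros H. destruct i as [|[|[|i]]]; destruct j as [|[|[|[|j]]]]; try lia; reflexivity. Qed.
Lemma gam_0 a b i : gam a b i 0%nat = C0.
Proof. destruct i as [|[|[|i]]]; reflexivity. Qed.

Ltac brute := cbv -[Cmul Cadd Copp C0 Defs.C1]; autorewrite with czero; try reflexivity; ring.

Lemma gam_f1 a b k : gcomp 3 f1 (gam a b) k = C0.
Proof.
  unfold f1. rewrite gcomp_sadd, !gcomp_monomial by reflexivity.
  destruct (Nat.leb_spec k 9).
  - do 10 (destruct k as [|k]; [brute|]). lia.
  - rewrite !(mono_high (gam a b)) by (try apply gam_high; simpl; lia).
    destruct (_ <=? _)%nat, (_ <=? _)%nat; autorewrite with czero; reflexivity.
Qed.

Lemma gam_plane a b k : gcomp 3 (plane_form a b) (gam a b) k = C0.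
Proof.
  unfold plane_form, linear_form. cbn [seq map fold_right].
  rewrite !gcomp_sadd, !gcomp_monomial by reflexivity.
  rewrite gcomp_zero by reflexivity.
  destruct (Nat.leb_spec k 3).
  - do 4 (destruct k as [|k]; [brute|]). lia.
  - rewrite !(mono_high (gam a b)) by (try apply gam_high; simpl; lia).
    destruct (_ <=? _)%nat; autorewrite with czero; reflexivity.
Qed.

Lemma gam_Gamma a b : a <> C0 -> in_Gamma 3 (gam a b).
Proof.
  intros Ha. split.
  - intros i Hi. split; [apply poly_conv; intros; apply gam_high; auto | apply gam_0].
  - exists 0%nat, 1%nat. split; [lia|]. simpl. apply Copp_neq0; auto.
Qed.

Lemma gam_minimal a b : a <> C0 -> minimal_param 3 (gam a b).
Proof.
  intros Ha [delta [phi [Hd [Hc [H0 [H1 H]]]]]].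
  specialize (H 0%nat ltac:(lia) 1%nat). 
  unfold comp1, mul1 in H. cbv -[Cmul Cadd Copp C0 Defs.C1] in H.
  rewrite H0, H1 in H. autorewrite with czero in H. apply (Copp_neq0 a); auto.
Qed.

Lemma gam_ord a b m : a <> C0 -> curve_ord 3 (gam a b) m -> m = 1%nat.
Proof.
  intros Ha [[i [Hi Hm]] H]. destruct m as [|[|m]]; auto.
  - rewrite gam_0 in Hm; congruence.
  - exfalso. apply (Copp_neq0 a Ha). apply (H 0%nat 1%nat); lia.
Qed.

Lemma gam_ratio_low a b h1 h2 k : (k < 4)%nat -> gcomp 3 (lin_comb [h1;h2] I_gens) (gam a b) k = C0.
Proof.
  intros Hk. destruct k as [|[|[|[|k]]]]; [brute|brute|brute|brute|lia].
Qed.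

Lemma gam_ratio a b g r : a <> C0 -> in_ideal 3 I_gens g -> ratio 3 g (gam a b) r -> ER_le (Fin 4) r.
Proof.
  intros Ha [hs [Hl [_ Heq]]] [m [Hm Hr]].
  apply gam_ord in Hm; auto. subst m.
  destruct hs as [|h1 [|h2 [|]]]; try discriminate.
  destruct Hr as [[k [[Hk _] ->]]|[_ ->]]; simpl; auto.
  destruct (Nat.ltb_spec k 4).
  - exfalso. apply Hk. rewrite (gcomp_ext _ _ _ _ _ Heq). apply gam_ratio_low; auto.
  - replace (INR 1) with 1 by reflexivity. unfold Rdiv. rewrite Rinv_1, Rmult_1_r.
    replace 4 with (INR 4) by (simpl; ring). apply le_INR; auto.
Qed.

Definition lin (p q : Cx) : curve := fun i k =>
  match i, k with 0%nat, 1%nat => p | 2%nat, 1%nat => q | _, _ => C0 end.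

Lemma lin_high p q i j : (3 < j)%nat -> lin p q i j = C0.
Proof. intros H. destruct i as [|[|[|i]]]; destruct j as [|[|[|[|j]]]]; try lia; reflexivity. Qed.
Lemma lin_0 p q i : lin p q i 0%nat = C0.
Proof. destruct i as [|[|[|i]]]; reflexivity. Qed.

Lemma lin_Gamma p q : p <> C0 \/ q <> C0 -> in_Gamma 3 (lin p q).
Proof.
  intros Hpq. split.
  - intros i Hi. split; [apply poly_conv; intros; apply lin_high; auto | apply lin_0].
  - destruct Hpq as [Hp|Hq]; [exists 0%nat, 1%nat | exists 2%nat, 1%nat]; split; auto; lia.
Qed.

Lemma lin_ord p q m : p <> C0 \/ q <> C0 -> curve_ord 3 (lin p q) m -> m = 1%nat.
Proof.
  intros Hpq [[i [Hi Hm]] H]. destruct m as [|[|m]]; auto.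
  - rewrite lin_0 in Hm; congruence.
  - exfalso. destruct Hpq as [Hp|Hq]; [apply Hp; apply (H 0%nat 1%nat) | apply Hq; apply (H 2%nat 1%nat)]; lia.
Qed.

Lemma lin_low1 w h1 h2 h3 k : (k < 3)%nat ->
  gcomp 3 (lin_comb [h1;h2;h3] (I_gens ++ [linear_form 3 w])) (lin (w 2%nat) (Copp (w 0%nat))) k = C0.
Proof.
  intros Hk. destruct k as [|[|[|k]]]; [brute|brute|brute|lia].
Qed.

Lemma lin_low2 w h1 h2 h3 k : w 0%nat = C0 -> (k < 3)%nat ->
  gcomp 3 (lin_comb [h1;h2;h3] (I_gens ++ [linear_form 3 w])) (lin Defs.C1 C0) k = C0.
Proof.
  intros Hw Hk. destruct k as [|[|[|k]]]; try lia;
  cbv -[Cmul Cadd Copp C0 Defs.C1]; rewrite ?Hw; autorewrite with czero; try reflexivity; ring.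
Qed.

Lemma ratio_ge_helper n g z r K : (forall m, curve_ord n z m -> m = 1%nat) ->
  (forall k, (k < K)%nat -> gcomp n g z k = C0) -> ratio n g z r -> ER_le (Fin (INR K)) r.
Proof.
  intros Hord Hlow [m [Hm Hr]]. apply Hord in Hm. subst m.
  destruct Hr as [[k [[Hk _] ->]]|[_ ->]]; simpl; auto.
  destruct (Nat.ltb_spec k K).
  - exfalso. apply Hk. apply Hlow; auto.
  - replace (INR 1) with 1 by reflexivity. unfold Rdiv. rewrite Rinv_1, Rmult_1_r.
    apply le_INR; auto.
Qed.

Lemma INR3 : INR 3 = 3. Proof. simpl; ring. Qed.

Lemma lower_curve w : exists z, in_Gamma 3 z /\
  forall g r, in_ideal 3 (I_gens ++ [linear_form 3 w]) g -> ratio 3 g z r -> ER_le (Fin 3) r.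
Proof.
  destruct (classic (w 0%nat = C0)) as [Hw|Hw].
  - exists (lin Defs.C1 C0). split. apply lin_Gamma; left; apply C1_neq0.
    intros g r [hs [Hl [_ Heq]]] Hr. rewrite <- INR3.
    destruct hs as [|h1 [|h2 [|h3 [|]]]]; try discriminate.
    apply (ratio_ge_helper 3 g (lin Defs.C1 C0) r 3); auto.
    + intros m; apply lin_ord; left; apply C1_neq0.
    + intros k Hk. rewrite (gcomp_ext _ _ _ _ _ Heq). apply lin_low2; auto.
  - exists (lin (w 2%nat) (Copp (w 0%nat))). split. apply lin_Gamma; right; apply Copp_neq0; auto.
    intros g r [hs [Hl [_ Heq]]] Hr. rewrite <- INR3.
    destruct hs as [|h1 [|h2 [|h3 [|]]]]; try discriminate.
    apply (ratio_ge_helper 3 g (lin (w 2%nat) (Copp (w 0%nat))) r 3); auto.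
    + intros m; apply lin_ord; right; apply Copp_neq0; auto.
    + intros k Hk. rewrite (gcomp_ext _ _ _ _ _ Heq). apply lin_low1; auto.
Qed.

Definition w3 : nat -> Cx := fun i => match i with 2%nat => Defs.C1 | _ => C0 end.

Lemma conv_szero : convergent 3 szero.
Proof. exists 0, 1. split; [lra|]. intros a _. unfold szero. rewrite Cmod_C0. lra. Qed.
Lemma conv_one3 : convergent 3 one3.
Proof. exists 1, 1. split; [lra|]. intros a _. rewrite pow1. unfold one3, monomial.
  destruct (list_eq_dec _ _ _).
  - unfold Cmod; simpl. replace (1*(1*1)+0*(0*1)) with 1 by ring. rewrite sqrt_1; lra.
  - rewrite Cmod_C0; lra. Qed.

Lemma gcomp_lc3 z k h1 h2 h3 g1 g2 g3 :
  gcomp 3 (lin_comb [h1;h2;h3] [g1;g2;g3]) z k =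
  Cadd (gcomp 3 (smul h1 g1) z k) (Cadd (gcomp 3 (smul h2 g2) z k) (gcomp 3 (smul h3 g3) z k)).
Proof. cbn [lin_comb]. rewrite !gcomp_sadd. rewrite (gcomp_zero 3 szero) by reflexivity. ring. Qed.
Lemma gcomp_smul0 z k g : gcomp 3 (smul szero g) z k = C0.
Proof. apply gcomp_zero. apply smul_szero. Qed.
Lemma gcomp_smul1 z k g : gcomp 3 (smul one3 g) z k = gcomp 3 g z k.
Proof. apply gcomp_ext. intros; apply smul_one3; auto. Qed.

Lemma lf_w3 : linear_form 3 w3 = sadd (monomial [1;0;0]%nat C0) (sadd (monomial [0;1;0]%nat C0) (sadd (monomial [0;0;1]%nat Defs.C1) szero)).
Proof. reflexivity. Qed.

Lemma mul1_ones s k : mul1 s (mul1 one1 (mul1 one1 one1)) k = s k.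
Proof. rewrite (mul1_ext s s _ one1). apply mul1_one_r. reflexivity. intros j; rewrite !mul1_one_l; reflexivity. Qed.

Lemma mono001 z k : mono_from z 0 [0;0;1]%nat k = z 2%nat k.
Proof. cbn [mono_from Defs.pow1]. rewrite !mul1_one_l, !mul1_one_r. reflexivity. Qed.
Lemma mono300 z k : mono_from z 0 [3;0;0]%nat k = Defs.pow1 (z 0%nat) 3 k.
Proof. cbn [mono_from]. cbn [Defs.pow1 Nat.pred]. apply mul1_ones. Qed.
Lemma mono020 z k : mono_from z 0 [0;2;0]%nat k = Defs.pow1 (z 1%nat) 2 k.
Proof. cbn [mono_from]. rewrite mul1_one_l. 
  rewrite (mul1_ext _ (Defs.pow1 (z 1%nat) 2) _ one1). apply mul1_one_r. reflexivity.
  intros j. cbn [Defs.pow1]. rewrite !mul1_one_l; reflexivity. Qed.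
Lemma mono011 z k : mono_from z 0 [0;1;1]%nat k = mul1 (z 1%nat) (z 2%nat) k.
Proof. cbn [mono_from Defs.pow1]. rewrite mul1_one_l.
  apply mul1_ext; intros j; rewrite ?mul1_one_r; auto. Qed.

Lemma ratio_le3 j m : (0 < m)%nat -> (j <= 3 * m)%nat -> ER_le (Fin (INR j / INR m)) (Fin 3).
Proof.
  intros Hm Hj. simpl. assert (H0 : 0 < INR m) by (apply lt_0_INR; lia).
  apply (Rmult_le_reg_r (INR m)); auto. unfold Rdiv. rewrite Rmult_assoc, Rinv_l, Rmult_1_r by lra.
  replace (3 * INR m) with (INR (3 * m)) by (rewrite mult_INR; simpl; ring). apply le_INR; auto.
Qed.

Lemma upper_curve z : in_Gamma 3 z -> exists g r,
  in_ideal 3 (I_gens ++ [linear_form 3 w3]) g /\ ratio 3 g z r /\ ER_le r (Fin 3).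
Proof.
  intros [Hz Hne].
  destruct (least_exists (fun n => exists i, (i < 3)%nat /\ z i n <> C0)) as [m [[i0 [Hi0 Hm]] Hmin]].
  { destruct Hne as [i [k [Hi Hk]]]. exists k, i; auto. }
  assert (Hlow : forall i j, (i < 3)%nat -> (j < m)%nat -> z i j = C0).
  { intros i j Hi Hj. apply NNPP. intro H. apply (Hmin j Hj). exists i; auto. }
  assert (Hord : curve_ord 3 z m) by (split; [exists i0; auto | auto]).
  assert (Hm0 : (0 < m)%nat).
  { destruct m; [|lia]. exfalso. apply Hm. apply Hz; auto. }
  destruct (classic (exists j, (j <= 3 * m)%nat /\ z 2%nat j <> C0)) as [[j [Hj Hzj]]|HB].
  -
    destruct (least_exists (fun j => z 2%nat j <> C0)) as [j0 [Hj0 Hj0min]]; [eauto|].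
    assert (Hj03 : (j0 <= 3 * m)%nat).
    { destruct (Nat.leb_spec j0 j); [lia|]. exfalso. apply (Hj0min j); auto. }
    exists (lin_comb [szero; szero; one3] (I_gens ++ [linear_form 3 w3])), (Fin (INR j0 / INR m)).
    split; [|split].
    + exists [szero; szero; one3]. split; [reflexivity|]. split.
      * repeat constructor; try apply conv_szero; apply conv_one3.
      * intros a _; reflexivity.
    + exists m. split; auto. left. exists j0. split; auto.
      assert (Hg : forall k, gcomp 3 (lin_comb [szero; szero; one3] (I_gens ++ [linear_form 3 w3])) z k = z 2%nat k).
      { intros k. cbn [I_gens app map]. rewrite gcomp_lc3, !gcomp_smul0, gcomp_smul1, lf_w3.
        rewrite !gcomp_sadd, !gcomp_monomial by reflexivity. rewrite (gcomp_zero 3 szero) by reflexivity.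
        rewrite mono001. destruct k.
        - simpl. autorewrite with czero. symmetry; apply Hz; lia.
        - simpl. autorewrite with czero. reflexivity. }
      split. * rewrite Hg; auto. * intros j' Hj'. rewrite Hg. apply NNPP. intro H. apply (Hj0min j'); auto.
    + apply ratio_le3; auto.
  - assert (Hz2 : forall j, (j <= 3 * m)%nat -> z 2%nat j = C0).
    { intros j Hj. apply NNPP. intro H. apply HB. eauto. }
    destruct (classic (z 0%nat m = C0)) as [Hz0|Hz0].
    +
      assert (Hz1 : z 1%nat m <> C0).
      { destruct i0 as [|[|[|i0]]]; auto; try lia. exfalso; apply Hm; apply Hz2; lia. }
      assert (Hg : forall k, gcomp 3 (lin_comb [szero; one3; szero] (I_gens ++ [linear_form 3 w3])) z k
                     = if (2 <=? k)%nat then Cmul Defs.C1 (Defs.pow1 (z 1%nat) 2 k) else C0).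
      { intros k. cbn [I_gens app map]. rewrite gcomp_lc3, !gcomp_smul0, gcomp_smul1.
        unfold f2. rewrite gcomp_monomial by reflexivity. rewrite mono020. simpl msize.
        autorewrite with czero. reflexivity. }
      exists (lin_comb [szero; one3; szero] (I_gens ++ [linear_form 3 w3])), (Fin (INR (2 * m) / INR m)).
      split; [|split].
      * exists [szero; one3; szero]. split; [reflexivity|]. split.
        -- repeat constructor; try apply conv_szero; apply conv_one3.
        -- intros a _; reflexivity.
      * exists m. split; auto. left. exists (2 * m)%nat. split; auto. split.
        -- rewrite Hg. replace (2 <=? 2 * m)%nat with true by (symmetry; apply Nat.leb_le; lia).
           rewrite Cmul_1_l. rewrite pow1_lead. apply Cpow_neq0; auto.
           intros j Hj; apply Hlow; auto.
        -- intros j Hj. rewrite Hg. destruct (_ <=? _)%nat; [|reflexivity].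
           rewrite (pow1_low _ m); [ring| |lia]. intros j' Hj'; apply Hlow; auto.
      * apply ratio_le3; auto; lia.
    +
      assert (Hg : forall k, gcomp 3 (lin_comb [one3; szero; szero] (I_gens ++ [linear_form 3 w3])) z k
                     = Cadd (if (3 <=? k)%nat then Cmul Defs.C1 (Defs.pow1 (z 0%nat) 3 k) else C0)
                            (if (2 <=? k)%nat then Cmul (Copp Defs.C1) (mul1 (z 1%nat) (z 2%nat) k) else C0)).
      { intros k. cbn [I_gens app map]. rewrite gcomp_lc3, !gcomp_smul0, gcomp_smul1.
        unfold f1. rewrite gcomp_sadd, !gcomp_monomial by reflexivity. rewrite mono300, mono011. simpl msize.
        autorewrite with czero. reflexivity. }
      assert (H12 : forall k, (k <= 3 * m)%nat -> mul1 (z 1%nat) (z 2%nat) k = C0).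
      { intros k Hk. apply (mul1_low _ _ m (S (3 * m))); [| |lia].
        - intros j Hj; apply Hlow; auto.
        - intros j Hj; apply Hz2; lia. }
      exists (lin_comb [one3; szero; szero] (I_gens ++ [linear_form 3 w3])), (Fin (INR (3 * m) / INR m)).
      split; [|split].
      * exists [one3; szero; szero]. split; [reflexivity|]. split.
        -- repeat constructor; try apply conv_szero; apply conv_one3.
        -- intros a _; reflexivity.
      * exists m. split; auto. left. exists (3 * m)%nat. split; auto. split.
        -- rewrite Hg. rewrite H12 by lia.
           replace (3 <=? 3 * m)%nat with true by (symmetry; apply Nat.leb_le; lia).
           destruct (_ <=? _)%nat; autorewrite with czero; rewrite pow1_lead; try apply Cpow_neq0; auto;
           intros j Hj; apply Hlow; auto.
        -- intros j Hj. rewrite Hg. rewrite H12 by lia.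
           destruct (3 <=? j)%nat, (2 <=? j)%nat; autorewrite with czero; try reflexivity;
           rewrite (pow1_low _ m); try reflexivity; try lia; intros j' Hj'; apply Hlow; auto.
      * apply ratio_le3; auto; lia.
Qed.

Theorem mainTheorem4 :
  Tq_is 3%nat 2%nat I_gens (Fin 3) /\
  (forall a b : Cx, a <> C0 -> b <> C0 ->
     exists gamma : curve,
       in_Gamma 3%nat gamma /\ minimal_param 3%nat gamma /\
       (forall k, gcomp 3%nat f1 gamma k = C0) /\
       (forall k, gcomp 3%nat (plane_form a b) gamma k = C0) /\
       (forall g r, in_ideal 3%nat I_gens g -> ratio 3%nat g gamma r -> ER_le (Fin 4) r)).
Proof.
  split.
  - split.
    + intros s [ws [Hl HT]]. destruct ws as [|w [|]]; try discriminate. cbn [map] in HT.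
      destruct (lower_curve w) as [z [Hz Hr]].
      destruct (inf_exists (fun r => exists g, in_ideal 3 (I_gens ++ [linear_form 3 w]) g /\ ratio 3 g z r))
        as [sz Hsz].
      { intros r [g [_ H]]. eapply ratio_nonneg; eauto. }
      apply ER_le_trans with sz.
      * apply Hsz. intros x [g [Hg Hx]]. eapply Hr; eauto.
      * apply HT. exists z; split; auto.
    + intros u Hu.
      set (J := in_ideal 3 (I_gens ++ [linear_form 3 w3])).
      destruct (sup_exists (fun s => exists z, in_Gamma 3 z /\ IsInf (fun r => exists g, J g /\ ratio 3 g z r) s))
        as [s Hs].
      { destruct (inf_exists (fun r => exists g, J g /\ ratio 3 g (lin Defs.C1 C0) r)) as [s0 Hs0].
        { intros r [g [_ H]]. eapply ratio_nonneg; eauto. }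
        exists s0, (lin Defs.C1 C0). split; auto. apply lin_Gamma; left; apply C1_neq0. }
      apply ER_le_trans with s.
      * apply Hu. exists [w3]. split; [reflexivity|]. exact Hs.
      * apply Hs. intros x [z [Hz Hx]].
        destruct (upper_curve z Hz) as [g [r [Hg [Hgr Hr3]]]].
        apply ER_le_trans with r; auto. apply Hx. exists g; split; auto.
  - intros a b Ha Hb. exists (gam a b). split; [|split; [|split; [|split]]].
    + apply gam_Gamma; auto.
    + apply gam_minimal; auto.
    + intros k; apply gam_f1.
    + intros k; apply gam_plane.
    + intros g r Hg Hr. apply (gam_ratio a b g r); auto.
Qed.
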